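(* Let $K$ be a real closed field. Then $h(K)\le d(K)$ (in particular $h(K)$ is defined).
   Context: A cut of a real closed field $F$ is a pair $C=(C^-,C^+)$ with $F=C^-\cup C^+$ disjoint and $C^-<C^+$; an element $a$ of an extension realizes $C$ if $C^-=\{c\in F:c<a\}$, $C^+=\{c\in F:c>a\}$. A set of cuts of $F$ is dependent if for every real closed field $L\supseteq F$ containing realizations $a_C$ of its members, $\{a_C\}$ is algebraically dependent over $F$; otherwise it is independent. The height $h(K)$ of a real closed field $K$ is the least ordinal $\alpha$ for which there is a continuous increasing sequence $(K_i:i\le\alpha)$ of real closed fields with $K_0$ countable, $K_\alpha=K$, and each $K_{i+1}$ the real closure of $K_i(S_i)$ for a set $S_i\subseteq K_{i+1}$ of realizations of an independent set of cuts of $K_i$. The depth $d(K)$ is the least regular cardinal $\kappa$ greater than the length of every strictly increasing (ordinal-indexed) sequence in $K$. *)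

(* Defs.v *)
(* real closed fields are rcfType; multivariate polynomials
   from multinomials' mpoly.  Ordinals/cardinals are represented by strict
   well-orders (T, R) compared via initial-segment embeddings. *)
From HB Require Import structures.
From mathcomp Require Import all_boot all_order all_algebra.
From mathcomp Require Import mpoly.
Set Implicit Arguments. Unset Strict Implicit. Unset Printing Implicit Defensive.
Import Order.TTheory GRing.Theory Num.Theory.
Local Open Scope ring_scope.

Definition strict_wellorder (T : Type) (R : T -> T -> Prop) : Prop :=
  [/\ forall x y z, R x y -> R y z -> R x z,
      forall x, ~ R x x,
      forall x y, [\/ R x y, x = y | R y x]
    & well_founded R].

Definition init_emb (A B : Type) (RA : A -> A -> Prop) (RB : B -> B -> Prop)
  (f : A -> B) : Prop :=
  (forall x y, RA x y -> RB (f x) (f y)) /\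
  (forall a b, RB b (f a) -> exists a', f a' = b).

Definition ord_le (A B : Type) (RA : A -> A -> Prop) (RB : B -> B -> Prop) :=
  exists f : A -> B, init_emb RA RB f.

Definition ord_lt (A B : Type) (RA : A -> A -> Prop) (RB : B -> B -> Prop) :=
  exists f : A -> B, init_emb RA RB f /\ exists b, forall a, f a <> b.

Definition sub_rel (T : Type) (R : T -> T -> Prop) (P : T -> Prop) :
  sig P -> sig P -> Prop := fun x y => R (proj1_sig x) (proj1_sig y).
Arguments sub_rel {T} R P _ _.

Definition is_cardinal (T : Type) (R : T -> T -> Prop) : Prop :=
  strict_wellorder R /\
  forall k : T, ~ exists f : sig (fun x => R x k) -> T,
      (forall x y, f x = f y -> x = y) /\ (forall t, exists x, f x = t).

Definition is_regular_cardinal (T : Type) (R : T -> T -> Prop) : Prop :=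
  [/\ is_cardinal R,
      (exists f : nat -> T, forall m n, f m = f n -> m = n)
    & forall X : T -> Prop, (forall k, exists2 x, X x & (R k x \/ k = x)) ->
        ord_le R (sub_rel R X)].

Section RCF.
Variable K : rcfType.

Definition bounds_increasing_seqs (T : Type) (R : T -> T -> Prop) : Prop :=
  forall (B : Type) (RB : B -> B -> Prop) (s : B -> K),
    strict_wellorder RB -> (forall x y, RB x y -> s x < s y) -> ord_lt RB R.

Definition is_depth (T : Type) (R : T -> T -> Prop) : Prop :=
  [/\ is_regular_cardinal R, bounds_increasing_seqs R
    & forall (T' : Type) (R' : T' -> T' -> Prop),
        is_regular_cardinal R' -> bounds_increasing_seqs R' -> ord_le R R'].

Definition subset_K (A B : K -> Prop) := forall x, A x -> B x.

Definition is_subfield (F : K -> Prop) : Prop :=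
  [/\ F 0, F 1,
      forall x y, F x -> F y -> F (x - y),
      forall x y, F x -> F y -> F (x * y)
    & forall x, F x -> x != 0 -> F x^-1].

Definition poly_over (F : K -> Prop) (p : {poly K}) : Prop :=
  forall i, F p`_i.

(* F (with the order induced from K) is real closed: the real closed
   axiom of MathComp's rcfType, relativized to F *)
Definition is_real_closed_subfield (F : K -> Prop) : Prop :=
  is_subfield F /\
  forall (p : {poly K}) (a b : K), poly_over F p -> F a -> F b ->
    a <= b -> p.[a] <= 0 <= p.[b] ->
    exists2 x, F x & (a <= x <= b) && root p x.

Definition gen_field (E : K -> Prop) : K -> Prop :=
  fun x => forall F, is_subfield F -> subset_K E F -> F x.

Definition algebraic_over (F : K -> Prop) (x : K) : Prop :=
  exists2 p : {poly K}, poly_over F p & p != 0 /\ root p x.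

Definition is_real_closure_of (L E : K -> Prop) : Prop :=
  [/\ is_real_closed_subfield L, subset_K E L
    & forall x, L x -> algebraic_over E x].

Definition cutT := ((K -> Prop) * (K -> Prop))%type.

Definition is_cut (F : K -> Prop) (C : cutT) : Prop :=
  [/\ forall x, F x <-> (C.1 x \/ C.2 x),
      forall x, ~ (C.1 x /\ C.2 x)
    & forall x y, C.1 x -> C.2 y -> x < y].

Definition ofield_emb (F : K -> Prop) (L : rcfType) (phi : K -> L) : Prop :=
  [/\ phi 1 = 1,
      forall x y, F x -> F y -> phi (x + y) = phi x + phi y,
      forall x y, F x -> F y -> phi (x * y) = phi x * phi y
    & forall x y, F x -> F y -> x < y -> phi x < phi y].

Definition realizes_in (F : K -> Prop) (L : rcfType) (phi : K -> L)
  (C : cutT) (a : L) : Prop :=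
  (forall c, C.1 c <-> (F c /\ phi c < a)) /\
  (forall c, C.2 c <-> (F c /\ a < phi c)).

Definition alg_dependent (F : K -> Prop) (L : rcfType) (phi : K -> L)
  (Cs : cutT -> Prop) (a : cutT -> L) : Prop :=
  exists (n : nat) (cs : 'I_n -> cutT),
    (forall i, Cs (cs i)) /\ (forall i j, cs i = cs j -> i = j) /\
    exists p : {mpoly K[n]},
      [/\ p != 0, (forall m, F p@_m) & mmap phi (fun i => a (cs i)) p = 0].

Definition cuts_dependent (F : K -> Prop) (Cs : cutT -> Prop) : Prop :=
  forall (L : rcfType) (phi : K -> L), ofield_emb F phi ->
    forall a : cutT -> L, (forall C, Cs C -> realizes_in F phi C (a C)) ->
      alg_dependent F phi Cs a.

Definition cuts_independent (F : K -> Prop) (Cs : cutT -> Prop) : Prop :=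
  (forall C, Cs C -> is_cut F C) /\ ~ cuts_dependent F Cs.

Definition realizes (F : K -> Prop) (C : cutT) (x : K) : Prop :=
  (forall c, C.1 c <-> (F c /\ c < x)) /\ (forall c, C.2 c <-> (F c /\ x < c)).

Definition realizes_indep_cuts (F S : K -> Prop) : Prop :=
  exists Cs : cutT -> Prop,
  [/\ cuts_independent F Cs,
      forall s, S s -> exists2 C, Cs C & realizes F C s,
      forall C, Cs C -> exists2 s, S s & realizes F C s
    & forall C s s', Cs C -> S s -> S s' -> realizes F C s -> realizes F C s' ->
        s = s'].

(* (Kc i : i <= alpha) indexed by a well-order (I,R) with greatest element
   top (so alpha is the order type of {i | R i top}), with sets S_i, is a
   continuous increasing sequence of real closed subfields witnessing that
   the height of K is at most alpha *)
Definition height_chain (I : Type) (R : I -> I -> Prop) (top : I)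
  (Kc S : I -> K -> Prop) : Prop :=
  [/\ strict_wellorder R,
      (forall i, R i top \/ i = top),
      (forall i, is_real_closed_subfield (Kc i)),
      (forall i j, R i j -> subset_K (Kc i) (Kc j))
    & [/\
      (forall i0, (forall j, ~ R j i0) ->
        exists g : K -> nat, forall x y, Kc i0 x -> Kc i0 y -> g x = g y -> x = y),
      (forall i, (exists j, R j i) -> (forall j, R j i -> exists2 k, R j k & R k i) ->
        forall x, Kc i x <-> exists2 j, R j i & Kc j x),
      (forall i j, R i j -> (forall k, ~ (R i k /\ R k j)) ->
        [/\ subset_K (S i) (Kc j), realizes_indep_cuts (Kc i) (S i)
          & is_real_closure_of (Kc j) (gen_field (fun x => Kc i x \/ S i x))])
    & (forall x, Kc top x)]].

End RCF.

(* Main.v *)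
Require Import Defs.
From HB Require Import structures.
From mathcomp Require Import all_boot all_order all_algebra.
From mathcomp Require Import mpoly.
From mathcomp Require Import boolp wochoice.
From mathcomp Require classical_sets.
From mathcomp Require Import polyrcf.
From mathcomp Require Import fingroup perm.
Set Implicit Arguments. Unset Strict Implicit. Unset Printing Implicit Defensive.
Import Order.TTheory GRing.Theory Num.Theory.

Section WO.
Variables (A : Type) (RA : A -> A -> Prop).
Hypothesis wA : strict_wellorder RA.

Lemma wo_trans x y z : RA x y -> RA y z -> RA x z.
Proof. by case: wA => h _ _ _; apply: h. Qed.
Lemma wo_irr x : ~ RA x x.
Proof. by case: wA => _ h _ _; apply: h. Qed.
Lemma wo_tri x y : [\/ RA x y, x = y | RA y x].
Proof. by case: wA => _ _ h _; apply: h. Qed.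
Lemma wo_wf : well_founded RA.
Proof. by case: wA. Qed.
Lemma wo_asym x y : RA x y -> ~ RA y x.
Proof. by move=> h1 h2; apply: (@wo_irr x); apply: wo_trans h2. Qed.

Lemma wo_min (P : A -> Prop) : (exists x, P x) ->
  exists x, P x /\ forall y, P y -> ~ RA y x.
Proof.
move=> [x Px]; apply: contrapT => hno.
suff : forall z, Acc RA z -> ~ P z by move/(_ x (wo_wf x)).
move=> z; elim => {}z _ ih Pz; apply: hno; exists z; split => // y Py Ryz.
exact: (ih y Ryz Py).
Qed.

Definition wmin (P : A -> Prop) : option A :=
  match pselect (exists x, P x /\ forall y, P y -> ~ RA y x) with
  | left h => Some (projT1 (cid h)) | right _ => None end.

Lemma wminP (P : A -> Prop) :
  match wmin P with
  | Some x => P x /\ forall y, P y -> ~ RA y x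
  | None => forall x, ~ P x end.
Proof.
rewrite /wmin; case: pselect => [h|h]; first by case: (cid h).
by move=> x Px; apply: h; apply: wo_min; exists x.
Qed.

Lemma mono_ge (f : A -> A) : (forall x y, RA x y -> RA (f x) (f y)) ->
  forall x, ~ RA (f x) x.
Proof.
move=> mono x; elim: (wo_wf x) => {}x _ ih h.
exact: (ih _ h (mono _ _ h)).
Qed.

Lemma no_self_lt : ~ ord_lt RA RA.
Proof.
case=> f [[mono init] [b nb]].
case: (wo_tri b (f b)) => [h|h|h].
- by have [a' e] := init b b h; apply: (nb a').
- by apply: (nb b); rewrite -h.
- exact: (mono_ge mono h).
Qed.

End WO.

Section Compare.
Variables (A B : Type) (RA : A -> A -> Prop) (RB : B -> B -> Prop).
Hypotheses (wA : strict_wellorder RA) (wB : strict_wellorder RB).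

Definition cmpF (a : A) (rec : forall a', RA a' a -> option B) : option B :=
  wmin RB (fun b => ~ exists a' (h : RA a' a), rec a' h = Some b).

Definition cmpf : A -> option B := Fix (wo_wf wA) (fun _ => option B) cmpF.

Lemma cmpf_eq a :
  cmpf a = wmin RB (fun b => ~ exists2 a', RA a' a & cmpf a' = Some b).
Proof.
rewrite /cmpf Fix_eq /cmpF.
  congr (wmin RB _); apply: funext => b; apply: propext; split.
    by move=> h [a' h1 h2]; apply: h; exists a', h1.
  by move=> h [a' [h1 h2]]; apply: h; exists a'.
move=> x f g fg; congr (wmin RB _); apply: funext => b; apply: propext.
by split => h [a' [h1 h2]]; apply: h; exists a', h1; rewrite ?fg // -fg.
Qed.

Definition Im a b := exists2 a', RA a' a & cmpf a' = Some b.

Lemma cmp_below a b y : cmpf a = Some b -> RB y b -> Im a y.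
Proof.
rewrite cmpf_eq; have := wminP wB (fun b => ~ Im a b).
case: wmin => // b' [nb hmin] [<-] yb.
by apply: contrapT => ny; apply: (hmin y ny).
Qed.

Lemma cmp_mono a' a b : RA a' a -> cmpf a = Some b ->
  exists2 b', cmpf a' = Some b' & RB b' b.
Proof.
move=> aa fa; have := fa; rewrite cmpf_eq.
have := wminP wB (fun b => ~ Im a b); case: wmin => // b1 [nb _] [e1].
rewrite e1 in nb.
case e : (cmpf a') => [b'|].
  exists b' => //.
  case: (wo_tri wB b' b) => [//|eb|bb'].
    by case: nb; exists a' => //; rewrite e eb.
  have [a'' h1 h2] := cmp_below e bb'.
  by case: nb; exists a'' => //; apply: (wo_trans wA h1).
have := e; rewrite cmpf_eq.
have := wminP wB (fun b => ~ Im a' b); case: wmin => // hall _.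
have := hall b; move=> /contrapT [a'' h1 h2].
by case: nb; exists a'' => //; apply: (wo_trans wA h1).
Qed.

Lemma cmp_inj a1 a2 b : cmpf a1 = Some b -> cmpf a2 = Some b -> a1 = a2.
Proof.
move=> e1 e2; case: (wo_tri wA a1 a2) => [h|//|h].
- have [b' e b'b] := cmp_mono h e2.
  by rewrite e1 in e; case: e => eb; rewrite eb in b'b; case: (wo_irr wB b'b).
- have [b' e b'b] := cmp_mono h e1.
  by rewrite e2 in e; case: e => eb; rewrite eb in b'b; case: (wo_irr wB b'b).
Qed.

Lemma wo_compare : ord_le RA RB \/ ord_lt RB RA.
Proof.
case: (pselect (exists a, cmpf a = None)) => [hN|hS].
  right.
  have [a0 [fa0 hmin]] := wo_min wA hN.
  have defd : forall a, RA a a0 -> exists b, cmpf a = Some b.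
    move=> a aa0; case e : (cmpf a) => [b|]; first by exists b.
    by case: (hmin a e aa0).
  have allIm : forall b, Im a0 b.
    move: fa0; rewrite cmpf_eq.
    have := wminP wB (fun b => ~ Im a0 b); case: wmin => // hall _ b.
    exact: (contrapT (hall b)).
  pose h := fun b => projT1 (cid2 (allIm b)).
  have hP : forall b, RA (h b) a0 /\ cmpf (h b) = Some b.
    by move=> b; rewrite /h; case: cid2.
  exists h; split; last first.
    by exists a0 => b e; have := (hP b).1; rewrite e; apply: wo_irr.
  split.
    move=> b1 b2 bb; case: (wo_tri wA (h b1) (h b2)) => [//|e|lt].
      have := (hP b1).2; rewrite e (hP b2).2 => -[eb].
      by rewrite eb in bb; case: (wo_irr wB bb).
    have [b' e b'b] := cmp_mono lt (hP b1).2.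
    rewrite (hP b2).2 in e; case: e => e; rewrite -e in b'b.
    by case: (wo_asym wB bb b'b).
  move=> b x xh.
  have [b' eb'] := defd x (wo_trans wA xh (hP b).1).
  by exists b'; apply: (cmp_inj (hP b').2 eb').
left.
have defd : forall a, exists b, cmpf a = Some b.
  move=> a; case e : (cmpf a) => [b|]; first by exists b.
  by case: hS; exists a.
pose g := fun a => projT1 (cid (defd a)).
have gP : forall a, cmpf a = Some (g a) by move=> a; rewrite /g; case: cid.
exists g; split.
  move=> x y xy; have [b' e b'b] := cmp_mono xy (gP y).
  by rewrite gP in e; case: e => ->.
move=> a b ba; have [a' _ e] := cmp_below (gP a) ba.
by exists a'; rewrite gP in e; case: e.
Qed.

End Compare.

Lemma sig_eq (A : Type) (P : A -> Prop) (x y : sig P) : proj1_sig x = proj1_sig y -> x = y.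
Proof. by case: x => a pa; case: y => b pb /= e; apply: eq_exist. Qed.

Definition iso (A B : Type) (RA : A -> A -> Prop) (RB : B -> B -> Prop) :=
  exists (f : A -> B) (g : B -> A),
    [/\ forall a, g (f a) = a, forall b, f (g b) = b
      & forall x y, RA x y <-> RB (f x) (f y)].

Section Iso.
Variables (A B : Type) (RA : A -> A -> Prop) (RB : B -> B -> Prop).

Lemma iso_sym : iso RA RB -> iso RB RA.
Proof.
case=> f [g [gf fg h]]; exists g, f; split => // x y.
by rewrite h !fg.
Qed.

Lemma sub_wo (P : A -> Prop) : strict_wellorder RA -> strict_wellorder (sub_rel RA P).
Proof.
move=> wA; split.
- move=> x y z; rewrite /sub_rel; exact: (wo_trans wA).
- move=> x; rewrite /sub_rel; exact: (wo_irr wA).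
- move=> x y; case: (wo_tri wA (proj1_sig x) (proj1_sig y)) => [h|e|h];
  [constructor 1|constructor 2; apply: sig_eq|constructor 3] => //.
- have acc : forall a, Acc RA a -> forall (pa : P a), Acc (sub_rel RA P) (exist P a pa).
    move=> a; elim => {}a _ ih pa; constructor => -[b pb] ba; exact: ih.
  by move=> [a pa]; apply: acc; apply: (wo_wf wA).
Qed.

Hypothesis wA : strict_wellorder RA.

Lemma iso_wo : iso RA RB -> strict_wellorder RB.
Proof.
case=> f [g [gf fg h]]; split.
- move=> x y z; rewrite -[x]fg -[y]fg -[z]fg -!h; exact: (wo_trans wA).
- move=> x; rewrite -[x]fg -h; exact: (wo_irr wA).
- move=> x y; case: (wo_tri wA (g x) (g y)) => [e|e|e].
  + by constructor 1; rewrite -[x]fg -[y]fg -h.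
  + by constructor 2; rewrite -[x]fg -[y]fg e.
  + by constructor 3; rewrite -[x]fg -[y]fg -h.
- have acc : forall a, Acc RA a -> Acc RB (f a).
    move=> a; elim => {}a _ ih; constructor => b; rewrite -[b]fg -h => ba.
    exact: ih.
  by move=> b; rewrite -[b]fg; apply: acc; apply: (wo_wf wA).
Qed.

Lemma iso_cardinal : iso RA RB -> is_cardinal RA -> is_cardinal RB.
Proof.
move=> hiso [_ cA]; split; first exact: iso_wo.
case: hiso => f [g [gf fg h]] k [F [Finj Fsurj]].
apply: (cA (g k)).
have pf : forall x : {a | RA a (g k)}, RB (f (proj1_sig x)) k.
  by move=> [a ha] /=; rewrite -[k]fg -h.
exists (fun x => g (F (exist _ (f (proj1_sig x)) (pf x)))); split.
  move=> x y /(congr1 f); rewrite !fg => /Finj /(congr1 (@proj1_sig _ _)) /=.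
  by move=> /(congr1 g); rewrite !gf; apply: sig_eq.
move=> a; have [[y hy] e] := Fsurj (f a).
have hy' : RA (g y) (g k) by rewrite h !fg.
exists (exist _ (g y) hy'); rewrite /=.
have -> : exist (fun b => RB b k) (f (g y)) (pf (exist _ (g y) hy')) = exist _ y hy.
  by apply: sig_eq; rewrite /= fg.
by rewrite e gf.
Qed.

Lemma iso_bounds (K : rcfType) : iso RA RB -> bounds_increasing_seqs K RA ->
  bounds_increasing_seqs K RB.
Proof.
case=> f [g [gf fg h]] bA Bs RBs s wBs incr.
have [e [[mono init] [m nm]]] := bA Bs RBs s wBs incr.
exists (fun b => f (e b)); split; last first.
  by exists (f m) => b /(congr1 g); rewrite !gf; apply: nm.
split; first by move=> x y xy; rewrite -h; apply: mono.
move=> b y; rewrite -[y]fg -h => /init [b' e'].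
by exists b'; rewrite e'.
Qed.

Lemma iso_regular : iso RA RB -> is_regular_cardinal RA -> is_regular_cardinal RB.
Proof.
move=> hiso [cA [fn fninj] cofA]; split; first exact: iso_cardinal.
  case: hiso => f [g [gf fg h]]; exists (fun n => f (fn n)).
  by move=> m n /(congr1 g); rewrite !gf; apply: fninj.
case: hiso => f [g [gf fg h]] Xb cofB.
pose Xa := fun a => Xb (f a).
have cofXa : forall k, exists2 x, Xa x & (RA k x \/ k = x).
  move=> k; have [x Xx hx] := cofB (f k); exists (g x); first by rewrite /Xa fg.
  case: hx => [hx|<-]; [left|right]; last by rewrite gf.
  by rewrite h fg.
have [e [mono init]] := cofA Xa cofXa.
pose pf := fun b => (proj2_sig (e (g b)) : Xb (f (proj1_sig (e (g b))))).
exists (fun b => exist Xb (f (proj1_sig (e (g b)))) (pf b)); split.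
  move=> x y xy; rewrite /sub_rel /= -h; apply: mono.
  by rewrite /sub_rel h !fg.
move=> b [y Xy]; rewrite /sub_rel /= => hy0.
have hy : RA (g y) (proj1_sig (e (g b))) by rewrite h fg.
have Xgy : Xa (g y) by rewrite /Xa fg.
have [a' ea'] := init (g b) (exist Xa (g y) Xgy) hy.
exists (f a'); apply: sig_eq; rewrite /= gf ea' /= fg //.
Qed.

End Iso.

Lemma iso_trans (A B C : Type) (RA : A -> A -> Prop) (RB : B -> B -> Prop)
  (RC : C -> C -> Prop) : iso RA RB -> iso RB RC -> iso RA RC.
Proof.
case=> f [g [gf fg h]] [f' [g' [gf' fg' h']]].
exists (fun a => f' (f a)), (fun c => g (g' c)); split.
- by move=> a; rewrite gf' gf.
- by move=> c; rewrite fg fg'.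
- by move=> x y; rewrite h h'.
Qed.

Lemma mono_inj (A B : Type) (RA : A -> A -> Prop) (RB : B -> B -> Prop) (e : A -> B) :
  strict_wellorder RA -> strict_wellorder RB ->
  (forall x y, RA x y -> RB (e x) (e y)) -> forall x y, e x = e y -> x = y.
Proof.
move=> wA wB mono x y exy; case: (wo_tri wA x y) => [h|//|h].
- by move: (mono _ _ h); rewrite exy => /(wo_irr wB).
- by move: (mono _ _ h); rewrite exy => /(wo_irr wB).
Qed.

Lemma ord_lt_iso (A B : Type) (RA : A -> A -> Prop) (RB : B -> B -> Prop) :
  strict_wellorder RA -> strict_wellorder RB -> ord_lt RA RB ->
  exists m : B, iso RA (sub_rel RB (fun y => RB y m)).
Proof.
move=> wA wB [e [[mono init] hm]].
have [m [nm mmin]] := wo_min wB hm.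
have below : forall a, RB (e a) m.
  move=> a; case: (wo_tri wB (e a) m) => [//|ea|me].
    by case: (nm a).
  by have [a' ea'] := init a m me; case: (nm a').
have inim : forall y, RB y m -> exists a, e a = y.
  move=> y ym; apply: contrapT => hy; apply: (mmin y) => // a ea.
  by apply: hy; exists a.
have einj := mono_inj wA wB mono.
exists m.
pose g := fun y : {y | RB y m} => projT1 (cid (inim _ (proj2_sig y))).
have gP : forall y, e (g y) = proj1_sig y by move=> y; rewrite /g; case: cid.
exists (fun a => exist (fun y => RB y m) (e a) (below a)), g; split.
- by move=> a; apply: einj; rewrite gP.
- by move=> y; apply: sig_eq; rewrite /= gP.
- move=> x y; rewrite /sub_rel /=; split; first exact: mono.
  move=> h; case: (wo_tri wA x y) => [//|exy|yx].
    by rewrite exy in h; case: (wo_irr wB h).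
  by case: (wo_asym wB h (mono _ _ yx)).
Qed.

Definition optR (A : Type) (R : A -> A -> Prop) (a b : option A) : Prop :=
  match a, b with
  | Some x, Some y => R x y
  | Some _, None => True
  | None, _ => False end.

Lemma optR_wo (A : Type) (R : A -> A -> Prop) : strict_wellorder R -> strict_wellorder (optR R).
Proof.
move=> wA; split.
- move=> [x|] [y|] [z|] //=; exact: (wo_trans wA).
- move=> [x|] //=; exact: (wo_irr wA).
- move=> [x|] [y|] /=.
  + case: (wo_tri wA x y) => [h|->|h]; [constructor 1|constructor 2|constructor 3] => //.
  + by constructor 1.
  + by constructor 3.
  + by constructor 2.
- have accS : forall x, Acc (optR R) (Some x).
    move=> x; elim: (wo_wf wA x) => {}x _ ih; apply: Acc_intro => -[y|] yx.
      exact: ih.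
    by [].
  move=> [x|]; first exact: accS.
  by apply: Acc_intro => -[y|] yx; [apply: accS|].
Qed.

Inductive tr (A : Type) : Type := Lf of A | Nd of tr A & tr A.

Definition injT (A B : Type) := exists f : A -> B, forall x y, f x = f y -> x = y.

Section Card.
Variable K : rcfType.
Local Notation X := (tr K).
Definition PX := X -> Prop.

Definition WP : rel PX := projT1 (well_ordering_principle PX).
Lemma WP_wo : well_order WP.
Proof. exact: projT2 (well_ordering_principle PX). Qed.

Lemma WP_min (A : {pred PX}) (a : PX) : a \in A -> exists z, z \in A /\ forall y, y \in A -> WP z y.
Proof. move=> aA; have [z [[zA lb] _]] := WP_wo (ex_intro _ a aA); by exists z. Qed.

Lemma WP_refl x : WP x x.
Proof.
have [z [zA h]] := @WP_min (pred1 x) x (eqxx _).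
by have := h x (eqxx _); move/eqP: zA => ->.
Qed.

Lemma WP_total x y : WP x y \/ WP y x.
Proof.
have hx : x \in pred2 x y by rewrite !inE eqxx.
have [z [zA h]] := @WP_min (pred2 x y) x hx.
move: zA h; rewrite !inE => /orP[/eqP ->|/eqP ->] h.
  by left; apply: h; rewrite !inE eqxx orbT.
by right; apply: h; rewrite !inE eqxx.
Qed.

Lemma WP_anti x y : WP x y -> WP y x -> x = y.
Proof.
move=> xy yx.
have hx : x \in pred2 x y by rewrite !inE eqxx.
have [z [[zA lb] hu]] := WP_wo (ex_intro _ x hx).
have ex : x = z.
  apply/esym; apply: hu; split; first by rewrite !inE eqxx.
  by move=> w; rewrite !inE => /orP[/eqP ->|/eqP ->] //; apply: WP_refl.
have ey : y = z.
  apply/esym; apply: hu; split; first by rewrite !inE eqxx orbT.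
  by move=> w; rewrite !inE => /orP[/eqP ->|/eqP ->] //; apply: WP_refl.
by rewrite ex ey.
Qed.

Lemma WP_trans x y z : WP x y -> WP y z -> WP x z.
Proof.
move=> xy yz.
have hx0 : x \in [pred w | (w == x) || (w == y) || (w == z)] by rewrite !inE eqxx.
have [m [mA h]] := @WP_min [pred w | (w == x) || (w == y) || (w == z)] x hx0.
have hx : WP m x by apply: h; rewrite !inE eqxx.
have hy : WP m y by apply: h; rewrite !inE eqxx orbT.
have hz : WP m z by apply: h; rewrite !inE eqxx !orbT.
move: mA; rewrite !inE => /orP[/orP[/eqP e|/eqP e]|/eqP e]; rewrite e in hx hy hz.
- exact: hz.
- by rewrite (WP_anti xy hx).
- by rewrite -(WP_anti yz hy) in hx; rewrite (WP_anti xy hx).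
Qed.

Definition Wl (a b : PX) : Prop := WP a b /\ a <> b.

Lemma Wl_wo : strict_wellorder Wl.
Proof.
split.
- move=> x y z [xy nxy] [yz nyz]; split; first exact: WP_trans xy yz.
  by move=> e; subst; apply: nxy; apply: WP_anti xy yz.
- by move=> x [_ h].
- move=> x y; case: (pselect (x = y)) => [->|ne]; first by constructor 2.
  case: (WP_total x y) => h; [constructor 1|constructor 3]; split => //.
  by move=> e; apply: ne.
- move=> a; apply: contrapT => na.
  have ha : a \in [pred w | `[< ~ Acc Wl w >]] by apply/asboolP.
  have [m [mA h]] := @WP_min [pred w | `[< ~ Acc Wl w >]] a ha.
  move/asboolP: mA => nm; apply: nm; constructor => y [ym nym].
  apply: contrapT => ny.
  have my : WP m y by apply: h; apply/asboolP.
  by apply: nym; apply: WP_anti.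
Qed.

Definition Po := option PX.
Definition Rp : Po -> Po -> Prop := optR Wl.
Lemma Rp_wo : strict_wellorder Rp.
Proof. exact: optR_wo Wl_wo. Qed.

Definition Seg (d : Po) := {w : Po | Rp w d}.
Definition RS (d : Po) : Seg d -> Seg d -> Prop := sub_rel Rp (fun w => Rp w d).
Arguments RS d : clear implicits.

Lemma RS_wo d : strict_wellorder (RS d).
Proof. exact: sub_wo Rp_wo. Qed.

Lemma cantor : ~ injT PX X.
Proof.
case=> f finj.
pose Dg := fun x => exists A, f A = x /\ ~ A x.
case: (pselect (Dg (f Dg))) => h.
  have [A [eA nA]] := h; have := finj _ _ eA => eAD; rewrite eAD in nA; exact: nA h.
by apply: (h); exists Dg.
Qed.

Lemma noinj_top : ~ injT (Seg None) X.
Proof.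
case=> g ginj; apply: cantor.
exists (fun p => g (exist (fun w => Rp w None) (Some p) I)).
by move=> x y /ginj /(congr1 (@proj1_sig _ _)) [].
Qed.

Lemma exists_c : exists c : Po, ~ injT (Seg c) X /\
  forall y, ~ injT (Seg y) X -> ~ Rp y c.
Proof. by apply: (wo_min Rp_wo); exists None; apply: noinj_top. Qed.

Definition cc : Po := projT1 (cid exists_c).
Lemma cc_noinj : ~ injT (Seg cc) X.
Proof. exact: (proj1 (projT2 (cid exists_c))). Qed.
Lemma cc_below d : Rp d cc -> injT (Seg d) X.
Proof.
move=> dc; apply: contrapT => nd; exact: (proj2 (projT2 (cid exists_c)) d nd dc).
Qed.

Local Notation kap := (Seg cc).
Local Notation Rkap := (RS cc).

Lemma below_inj (k : kap) : injT {x : kap | Rkap x k} X.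
Proof.
have [h hinj] := cc_below (proj2_sig k).
exists (fun x => h (exist (fun w => Rp w (proj1_sig k)) (proj1_sig (proj1_sig x)) (proj2_sig x))).
move=> x y /hinj /(congr1 (@proj1_sig _ _)) /= e.
by apply: sig_eq; apply: sig_eq.
Qed.

Lemma Nd_inj (a b c d : X) : Nd a b = Nd c d -> a = c /\ b = d.
Proof. by case. Qed.

Lemma kap_succ (y : kap) : exists z, Rkap y z.
Proof.
apply: contrapT => hno; apply: cc_noinj.
have [h hinj] := below_inj y.
have eqy : forall z, ~ Rkap z y -> z = y.
  move=> z nz; case: (wo_tri (RS_wo cc) z y) => // yz; by case: hno; exists z.
exists (fun z : kap => match pselect (Rkap z y) with
  | left hz => Nd (h (exist _ z hz)) (Lf (0%R : K))
  | right _ => Lf (0%R : K) end).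
move=> z1 z2; case: pselect => [h1|h1]; case: pselect => [h2|h2] // e.
  by case: e => /hinj /(congr1 (@proj1_sig _ _)).
by rewrite (eqy _ h1) (eqy _ h2).
Qed.

Lemma kap_ne : exists y : kap, True.
Proof.
apply: contrapT => hno; apply: cc_noinj.
by exists (fun _ => Lf (0%R : K)) => x; case: hno; exists x.
Qed.

Lemma kap_inf : exists f : nat -> kap, forall m n, f m = f n -> m = n.
Proof.
have [y0 _] := kap_ne.
pose sc := fun y : kap => projT1 (cid (kap_succ y)).
have scP : forall y, Rkap y (sc y) by move=> y; rewrite /sc; case: cid.
pose f := fix f n := match n with O => y0 | S n => sc (f n) end.
have mono : forall m n, (m < n)%N -> Rkap (f m) (f n).
  move=> m n; elim: n => [//|n ih]; rewrite ltnS leq_eqVlt => /orP[/eqP ->|/ih h].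
    exact: scP.
  exact: (wo_trans (RS_wo cc) h (scP _)).
exists f => m n e; case: (ltngtP m n) => // h.
- by have := mono _ _ h; rewrite e => /(wo_irr (RS_wo cc)).
- by have := mono _ _ h; rewrite e => /(wo_irr (RS_wo cc)).
Qed.

Lemma kap_card : is_cardinal Rkap.
Proof.
split; first exact: RS_wo.
move=> k [F [Finj Fsurj]]; apply: cc_noinj.
pose G := fun y => projT1 (cid (Fsurj y)).
have GP : forall y, F (G y) = y by move=> y; rewrite /G; case: cid.
have [h hinj] := below_inj k.
exists (fun y => h (G y)) => x y /hinj e.
by rewrite -(GP x) -(GP y) e.
Qed.

Lemma kap_bounds : bounds_increasing_seqs K Rkap.
Proof.
move=> B RB s wB incr.
case: (wo_compare (RS_wo cc) wB) => [[e [mono _]]|//].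
exfalso; apply: cc_noinj; exists (fun k => Lf (s (e k))) => x y [] es.
apply: (mono_inj (RS_wo cc) wB mono).
case: (wo_tri wB (e x) (e y)) => [h|//|h].
- by move: (incr _ _ h); rewrite es Order.POrderTheory.ltxx.
- by move: (incr _ _ h); rewrite es Order.POrderTheory.ltxx.
Qed.

Lemma kap_cof (Xs : kap -> Prop) : (forall k, exists2 x, Xs x & (Rkap k x \/ k = x)) ->
  ord_le Rkap (sub_rel Rkap Xs).
Proof.
move=> cof.
case: (wo_compare (RS_wo cc) (sub_wo Xs (RS_wo cc))) => [//|hlt].
exfalso; apply: cc_noinj.
have [m [f1 [g1 [gf1 _ _]]]] := ord_lt_iso (sub_wo Xs (RS_wo cc)) (RS_wo cc) hlt.
have [h hinj] := below_inj m.
pose pick := fun y : kap => projT1 (cid2 (cof y)).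
have pickX : forall y, Xs (pick y) by move=> y; rewrite /pick; case: cid2.
have pickR : forall y, Rkap y (pick y) \/ y = pick y by move=> y; rewrite /pick; case: cid2.
pose hb := fun x : kap => projT1 (cid (below_inj x)).
have hbinj : forall x, forall a b, hb x a = hb x b -> a = b.
  by move=> x; rewrite /hb; case: cid.
pose hb' := fun x z : kap => match pselect (Rkap z x) with
  | left H => Nd (hb x (exist _ z H)) (Lf (0%R : K))
  | right _ => Lf (0%R : K) end.
have hb'inj : forall x y1 y2, hb' x y1 = hb' x y2 -> (Rkap y1 x \/ y1 = x) ->
    (Rkap y2 x \/ y2 = x) -> y1 = y2.
  move=> x y1 y2; rewrite /hb'; case: pselect => [h1|h1]; case: pselect => [h2|h2] //.
    by case => /hbinj /(congr1 (@proj1_sig _ _)).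
  by move=> _ [//|->] [//|->].
exists (fun y => Nd (h (f1 (exist Xs (pick y) (pickX y)))) (hb' (pick y) y)).
move=> y1 y2 [] /hinj e1 e2.
have ep : pick y1 = pick y2.
  by have := congr1 g1 e1; rewrite !gf1 => /(congr1 (@proj1_sig _ _)).
rewrite ep in e2; apply: (hb'inj _ _ _ e2); last exact: pickR.
by rewrite -ep; apply: pickR.
Qed.

Lemma kap_regular : is_regular_cardinal Rkap.
Proof. split; [exact: kap_card|exact: kap_inf|exact: kap_cof]. Qed.

Definition GoodD (d : Po) :=
  is_regular_cardinal (RS d) /\ bounds_increasing_seqs K (RS d).

Lemma seg_nest (c : Po) (m : Seg c) :
  iso (sub_rel (RS c) (fun y => RS c y m)) (RS (proj1_sig m)).
Proof.
have mc := proj2_sig m.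
pose f := fun y : {y : Seg c | RS c y m} =>
  exist (fun w => Rp w (proj1_sig m)) (proj1_sig (proj1_sig y)) (proj2_sig y).
have pc : forall b : Seg (proj1_sig m), Rp (proj1_sig b) c.
  by move=> b; apply: (wo_trans Rp_wo (proj2_sig b) mc).
pose g := fun b : Seg (proj1_sig m) =>
  exist (fun y => RS c y m) (exist (fun w => Rp w c) (proj1_sig b) (pc b)) (proj2_sig b).
exists f, g; split.
- by move=> y; apply: sig_eq; apply: sig_eq.
- by move=> b; apply: sig_eq.
- by move=> x y.
Qed.

Lemma depth_exists : exists (T : Type) (Rk : T -> T -> Prop), is_depth K Rk.
Proof.
have Gc : GoodD cc by split; [exact: kap_regular|exact: kap_bounds].
have [c' [Gc' hmin]] := wo_min Rp_wo (ex_intro _ cc Gc).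
exists (Seg c'), (RS c'); split; [exact: Gc'.1|exact: Gc'.2|].
move=> T' R' regT' bndT'.
have wT' : strict_wellorder R' by case: regT' => -[].
case: (wo_compare (RS_wo c') wT') => [//|hlt]; exfalso.
have [m hiso] := ord_lt_iso wT' (RS_wo c') hlt.
have hiso2 := iso_trans hiso (seg_nest m).
apply: (hmin (proj1_sig m)) (proj2_sig m); split.
- exact: iso_regular wT' hiso2 regT'.
- exact: (iso_bounds hiso2 bndT').
Qed.

End Card.

Local Open Scope ring_scope.

Section SubF.
Variable K : rcfType.
Variable E : K -> Prop.
Hypothesis hE : is_subfield E.

Definition Eb : {pred K} := fun x => `[< E x >].

Lemma Eb_divring : divring_closed Eb.
Proof.
case: hE => E0 E1 EB EM EV; split.
- exact/asboolP.
- by move=> x y /asboolP Ex /asboolP Ey; apply/asboolP; apply: EB.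
- move=> x y /asboolP Ex /asboolP Ey; apply/asboolP.
  have [->|y0] := eqVneq y 0; first by rewrite invr0 mulr0.
  by apply: EM => //; apply: EV.
Qed.

HB.instance Definition _ := GRing.isDivringClosed.Build K Eb Eb_divring.

Inductive SE := mkSE x & x \in Eb.
Definition vSE u := let: mkSE x _ := u in x.
HB.instance Definition _ := [isSub for vSE].
HB.instance Definition _ := [Choice of SE by <:].
HB.instance Definition _ := [SubChoice_isSubComUnitRing of SE by <:].
HB.instance Definition _ := [SubComUnitRing_isSubIntegralDomain of SE by <:].
HB.instance Definition _ := [SubIntegralDomain_isSubField of SE by <:].


Let vr : {rmorphism SE -> K} := val.

Lemma alg_equiv x : algebraic_over E x <-> algebraicOver vr x.
Proof.
split.
- case=> p pE [p0 px].
  pose q := \poly_(i < size p) insubd (0 : SE) p`_i.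
  have e : map_poly vr q = p.
    apply/polyP => i; rewrite coef_map coef_poly /=.
    case: ltnP => [_|/(nth_default 0) ->]; last first.
      exact: (rmorph0 vr).
    have Ep : p`_i \in Eb by apply/asboolP.
    exact: (insubdK 0 Ep).
  exists q; last by rewrite e.
  by rewrite -(map_poly_eq0 vr) e.
- case=> q q0 qx; exists (map_poly vr q).
    by move=> i; rewrite coef_map /=; apply/asboolP; exact: (valP (q`_i)).
  by split => //; rewrite map_poly_eq0.
Qed.

Lemma alg_sub : subset_K E (algebraic_over E).
Proof.
move=> x Ex; apply/alg_equiv.
have xE : x \in Eb by apply/asboolP.
have -> : x = vr (Sub x xE) by [].
exact: algebraic_id.
Qed.

Lemma alg_subfield : is_subfield (algebraic_over E).
Proof.
split.
- by apply/alg_equiv/algebraic0.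
- by apply/alg_equiv/algebraic1.
- by move=> x y /alg_equiv hx /alg_equiv hy; apply/alg_equiv/algebraic_sub.
- by move=> x y /alg_equiv hx /alg_equiv hy; apply/alg_equiv/algebraic_mul.
- by move=> x /alg_equiv hx _; apply/alg_equiv/algebraic_inv.
Qed.

Lemma alg_rc : is_real_closed_subfield (algebraic_over E).
Proof.
split; first exact: alg_subfield.
move=> p a b pA Aa Ab ab hab.
have [x /andP[ax xb] rx] := poly_ivt ab hab.
have [->|p0] := eqVneq p 0.
  by exists a => //; rewrite lexx ab /= root0.
exists x; last by rewrite ax xb.
apply/alg_equiv/integral_algebraic.
apply: (integral_root p0 rx) => z /(nthP 0) [i _ <-].
by apply/integral_algebraic/alg_equiv.
Qed.

End SubF.

Section SF.
Variable K : rcfType.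
Variable F : K -> Prop.
Hypothesis hF : is_subfield F.

Lemma sf0 : F 0. Proof. by case: hF. Qed.
Lemma sf1 : F 1. Proof. by case: hF. Qed.
Lemma sfB x y : F x -> F y -> F (x - y). Proof. by case: hF => _ _ h _ _; apply: h. Qed.
Lemma sfM x y : F x -> F y -> F (x * y). Proof. by case: hF => _ _ _ h _; apply: h. Qed.
Lemma sfN x : F x -> F (- x). Proof. by move=> h; rewrite -sub0r; apply: sfB => //; apply: sf0. Qed.
Lemma sfD x y : F x -> F y -> F (x + y).
Proof. by move=> hx hy; rewrite -[y]opprK; apply: sfB => //; apply: sfN. Qed.
Lemma sfX x k : F x -> F (x ^+ k).
Proof. by move=> hx; elim: k => [|k ih]; [rewrite expr0; apply: sf1|rewrite exprS; apply: sfM]. Qed.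
Lemma sf_sum I (r : seq I) (P : pred I) (f : I -> K) :
  (forall i, P i -> F (f i)) -> F (\sum_(i <- r | P i) f i).
Proof. by move=> h; apply: (big_ind F sf0 sfD). Qed.
Lemma sf_prod I (r : seq I) (P : pred I) (f : I -> K) :
  (forall i, P i -> F (f i)) -> F (\prod_(i <- r | P i) f i).
Proof. by move=> h; apply: (big_ind F sf1 sfM). Qed.
Lemma sf_nat k : F k%:R.
Proof. elim: k => [|k ih]; [exact: sf0|by rewrite mulrS; apply: sfD => //; apply: sf1]. Qed.

Lemma meval_in n (Gc : K -> Prop) (p : {mpoly K[n]}) (t : 'I_n -> K) :
  (forall m, Gc p@_m) -> (forall i, F (t i)) -> subset_K Gc F -> F p.@[t].
Proof.
move=> hp ht hGF; rewrite mevalE; apply: sf_sum => m _.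
apply: sfM; first exact: hGF.
by apply: sf_prod => i _; apply: sfX.
Qed.
End SF.

Section MP.
Variable K : rcfType.

Lemma meval_msym n (s : 'S_n) (t : 'I_n -> K) (p : {mpoly K[n]}) :
  (msym s p).@[t] = p.@[fun i => t (s i)].
Proof.
rewrite /msym /mmap rmorph_sum mevalE; apply: eq_bigr => m _.
rewrite rmorphM /= mevalC /mmap1 rmorph_prod; congr (_ * _).
by apply: eq_bigr => i _; rewrite rmorphXn /= mevalXU.
Qed.

End MP.

Section Good.
Variable K : rcfType.

Lemma gen_subfield (E : K -> Prop) : is_subfield (gen_field E).
Proof.
split.
- by move=> F' hF' _; case: hF'.
- by move=> F' hF' _; case: hF'.
- by move=> x y hx hy F' hF' hE; apply: sfB => //; [apply: hx|apply: hy].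
- by move=> x y hx hy F' hF' hE; apply: sfM => //; [apply: hx|apply: hy].
- move=> x hx x0 F2 hF2 hE; case: (hF2) => _ _ _ _ h; apply: h => //; apply: hx => //.
Qed.

Lemma gen_contains (E : K -> Prop) : subset_K E (gen_field E).
Proof. by move=> x Ex F' _ h; apply: h. Qed.

Definition mr n (m : 'X_{1..n.+1}) : 'X_{1..n} :=
  [multinom m (widen_ord (leqnSn n) i) | i < n].

Lemma mr_inj n (m1 m2 : 'X_{1..n.+1}) :
  m1 ord_max = m2 ord_max -> mr m1 = mr m2 -> m1 = m2.
Proof.
move=> hmax hmr; apply/mnmP => i.
case: (ltnP i n) => h.
  have -> : i = widen_ord (leqnSn n) (Ordinal h) by apply: val_inj.
  by have := congr1 (fun m : 'X_{1..n} => m (Ordinal h)) hmr; rewrite /mr !mnmE.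
have -> : i = ord_max by apply/val_inj/anti_leq; rewrite h -ltnS ltn_ord.
exact: hmax.
Qed.

Lemma extend_last (F S : K -> Prop) (hF : is_subfield F) (x : K) n
    (t : 'I_n.+1 -> K) (p : {mpoly K[n.+1]}) :
  (forall n (t : 'I_n -> K), injective t -> (forall i, S (t i)) ->
     forall p : {mpoly K[n]}, (forall m, F p@_m) -> p.@[t] = 0 -> p = 0) ->
  ~ algebraic_over (gen_field (fun y => F y \/ S y)) x ->
  t ord_max = x ->
  injective (fun i : 'I_n => t (widen_ord (leqnSn n) i)) ->
  (forall i : 'I_n, S (t (widen_ord (leqnSn n) i))) ->
  (forall m, F p@_m) -> p.@[t] = 0 -> p = 0.
Proof.
move=> goodS nalg tx tinj tS pF pt0.
pose G := gen_field (fun y => F y \/ S y).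
have hG : is_subfield G by apply: gen_subfield.
have FG : subset_K F G by move=> y Fy; apply: gen_contains; left.
have SG : forall y, S y -> G y by move=> y Sy; apply: gen_contains; right.
pose tw := fun i : 'I_n => t (widen_ord (leqnSn n) i).
pose q k : {mpoly K[n]} :=
  \sum_(m <- msupp p | m ord_max == k) p@_m *: 'X_[mr m].
pose P : {poly K} := \sum_(m <- msupp p)
   (p@_m * \prod_(i < n) tw i ^+ (mr m i)) *: 'X^(m ord_max).
have Pk k : P`_k = (q k).@[tw].
  rewrite /P /q coef_sum rmorph_sum /= [RHS]big_mkcond /=; apply: eq_bigr => m _.
  rewrite coefZ coefXn; case: (m ord_max =P k) => [e|ne].
    by rewrite e eqxx mulr1 mevalZ mevalX.
  have -> : (k == m ord_max) = false by apply/eqP => e; apply: ne; rewrite e.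
  by rewrite mulr0.
have Px : P.[x] = p.@[t].
  rewrite /P horner_sum mevalE; apply: eq_bigr => m _.
  rewrite hornerZ hornerXn big_ord_recr /= -tx -mulrA; congr (_ * (_ * _)).
  by apply: eq_bigr => i _; rewrite /mr mnmE.
have qF k m' : F (q k)@_m'.
  rewrite /q raddf_sum /=; apply: sf_sum => // m _.
  by rewrite mcoeffZ mcoeffX; apply: sfM => //; apply: sf_nat.
have PG k : G P`_k.
  by rewrite Pk; apply: (meval_in hG (qF k)) => // i; apply: SG; apply: tS.
have P0 : P = 0.
  case: (eqVneq P 0) => // Pn0; exfalso; apply: nalg; exists P => //.
  by split => //; rewrite /root Px pt0.
have q0 k : q k = 0.
  apply: (goodS _ tw) => //.
  by rewrite -Pk P0 coef0.
apply/mpolyP => m; rewrite mcoeff0.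
have <- : (q (m ord_max))@_(mr m) = p@_m.
  rewrite /q raddf_sum /= [in RHS](mpolyE p) raddf_sum /= big_mkcond /=.
  apply: eq_bigr => m' _; rewrite !mcoeffZ !mcoeffX.
  case: (eqVneq m' m) => [->|ne]; first by rewrite !eqxx.
  rewrite mulr0; case: eqP => // hm.
  case: eqP => [hr|]; last by rewrite mulr0.
  by case/eqP: ne; apply: mr_inj.
by rewrite q0 mcoeff0.
Qed.


Definition between (c a b : K) := (a < c < b) \/ (b < c < a).

Definition indepS (F S : K -> Prop) :=
  forall n (t : 'I_n -> K), injective t -> (forall i, S (t i)) ->
    forall p : {mpoly K[n]}, (forall m, F p@_m) -> p.@[t] = 0 -> p = 0.

Definition good (F S : K -> Prop) :=
  (forall s s', S s -> S s' -> s <> s' -> exists2 c, F c & between c s s') /\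
  indepS F S.

Lemma indep_ext (F S : K -> Prop) (x : K) : is_subfield F -> indepS F S ->
  ~ algebraic_over (gen_field (fun y => F y \/ S y)) x ->
  indepS F (fun y => S y \/ y = x).
Proof.
move=> hF gS nalg n t tinj tS p pF pt0.
case: (pselect (exists j, t j = x)) => [[j tj]|nx]; last first.
  apply: (gS _ t) => // i; case: (tS i) => // ti; case: nx; by exists i.
case: n j t tinj tS p pF pt0 tj => [[]//|n] j t tinj tS p pF pt0 tj.
pose s := tperm j ord_max.
pose t' := fun i => t (s i).
have tt' : (fun i => t' (s i)) = t by apply: funext => i; rewrite /t' tpermK.
have e0 : (msym s p).@[t'] = 0 by rewrite meval_msym tt'.
have pF' m : F (msym s p)@_m by rewrite mcoeff_sym.
have t'max : t' ord_max = x by rewrite /t' tpermR.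
have winj : injective (fun i : 'I_n => t' (widen_ord (leqnSn n) i)).
  move=> i1 i2 /tinj /perm_inj /(congr1 val) /= e; exact: val_inj.
have wS : forall i : 'I_n, S (t' (widen_ord (leqnSn n) i)).
  move=> i; case: (tS (s (widen_ord (leqnSn n) i))) => // e.
  have : s (widen_ord (leqnSn n) i) = j by apply: tinj; rewrite e tj.
  move/(congr1 s); rewrite tpermK tpermL => /(congr1 val) /= e'.
  by move: (ltn_ord i); rewrite e' ltnn.
have := extend_last hF gS nalg t'max winj wS pF' e0.
by move=> /(congr1 (msym s)); rewrite -msymMm tperm2 msym1m msym0.
Qed.

Lemma good_ext (F S : K -> Prop) (x : K) : is_subfield F -> good F S ->
  ~ algebraic_over (gen_field (fun y => F y \/ S y)) x ->
  (forall s, S s -> exists2 c, F c & between c s x) ->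
  good F (fun y => S y \/ y = x).
Proof.
move=> hF [dS gS] nalg hx; split; last exact: indep_ext.
move=> a b [Sa|->] [Sb|->] ab.
- exact: dS.
- exact: hx.
- have [c Fc bc] := hx _ Sb; exists c => //.
  by case: bc; [right|left].
- by case: ab.
Qed.


Lemma good_disjoint (F S : K -> Prop) : is_subfield F -> good F S ->
  forall s, S s -> ~ F s.
Proof.
move=> hF [_ gS] s Ss Fs.
pose t := fun _ : 'I_1 => s.
pose p : {mpoly K[1]} := 'X_ord0 - s%:MP.
have tinj : injective t by move=> i j _; rewrite !ord1.
have pF m : F p@_m.
  rewrite /p mcoeffB mcoeffX mcoeffC; apply: sfB => //; first exact: sf_nat.
  by apply: sfM => //; apply: sf_nat.
have pt : p.@[t] = 0 by rewrite /p mevalB mevalXU mevalC subrr.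
have := gS 1 t tinj (fun _ => Ss) p pF pt.
move/(congr1 (mcoeff U_(ord0)%MM)); rewrite /p mcoeffB mcoeffX mcoeffC eqxx.
by rewrite mnm1_eq0 mulr0 subr0 mcoeff0 => /eqP; rewrite oner_eq0.
Qed.

Lemma indep_nvar0 (F : K -> Prop) (t : 'I_0 -> K) (p : {mpoly K[0]}) :
  p.@[t] = 0 -> p = 0.
Proof. by rewrite [p]nvar0_mpolyC mevalC => ->. Qed.

Lemma good_chain (F : K -> Prop) (Fam : (K -> Prop) -> Prop) :
  (forall X, Fam X -> good F X) ->
  (forall X Y, Fam X -> Fam Y -> subset_K X Y \/ subset_K Y X) ->
  good F (fun y => exists2 X, Fam X & X y).
Proof.
move=> hg htot.
have lst : forall l : seq K, (forall y, y \in l -> exists2 X, Fam X & X y) ->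
    l != [::] -> exists2 X, Fam X & forall y, y \in l -> X y.
  elim => [//|a l ih] hl _.
  have [Xa FXa Xa_a] := hl a (mem_head _ _).
  case: (eqVneq l [::]) => [->|ln].
    by exists Xa => // y; rewrite inE => /eqP ->.
  have [Xl FXl hXl] := ih (fun y yl => hl y (@mem_behead _ (a :: l) y yl)) ln.
  case: (htot _ _ FXa FXl) => sub.
    by exists Xl => // y; rewrite inE => /orP[/eqP ->|/hXl//]; apply: sub.
  by exists Xa => // y; rewrite inE => /orP[/eqP ->//|/hXl]; apply: sub.
split.
  move=> a b [Xa FXa Xa_a] [Xb FXb Xb_b] ab.
  case: (htot _ _ FXa FXb) => sub.
    by apply: (proj1 (hg _ FXb)) => //; apply: sub.
  by apply: (proj1 (hg _ FXa)) => //; apply: sub.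
move=> [|n] t tinj tS p pF pt0; first exact: (indep_nvar0 F pt0).
have hl : forall y, y \in [seq t i | i <- enum 'I_n.+1] -> exists2 X, Fam X & X y.
  by move=> y /mapP [i _ ->]; apply: tS.
have ne : [seq t i | i <- enum 'I_n.+1] != [::].
  by apply/eqP => /(congr1 size); rewrite size_map size_enum_ord.
have [X FX hX] := lst _ hl ne.
apply: (proj2 (hg _ FX) _ t) => // i; apply: hX.
by apply/mapP; exists i => //; rewrite mem_enum.
Qed.

Definition cutof (F : K -> Prop) (s : K) : cutT K :=
  (fun c => F c /\ c < s, fun c => F c /\ s < c).

Lemma good_realizes (F S : K -> Prop) : is_subfield F -> good F S ->
  realizes_indep_cuts F S.
Proof.
move=> hF gS; have [dS iS] := gS.
have disj := good_disjoint hF gS.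
pose Cs := fun C => exists2 s, S s & C = cutof F s.
exists Cs; split.
- split.
    move=> C [s Ss ->]; split => /=.
    + move=> x; split; last by case=> -[].
      move=> Fx; case: (ltgtP x s) => [xs|sx|xs]; [left|right|] => //.
      by case: (disj s Ss); rewrite -xs.
    + by move=> x [[_ xs] [_ sx]]; move: (lt_trans xs sx); rewrite ltxx.
    + by move=> x y [_ xs] [_ sy]; apply: lt_trans sy.
  move=> dep.
  pose a := fun C : cutT K =>
    match pselect (exists s, S s /\ C = cutof F s) with
    | left h => projT1 (cid h)
    | right _ => 0 end.
  have ha : forall C, Cs C -> S (a C) /\ C = cutof F (a C).
    move=> C [s Ss eC]; rewrite /a; case: pselect => [h|[]]; last by exists s.
    by case: (cid h).
  have emb : ofield_emb F (fun x : K => x) by split.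
  have real : forall C, Cs C -> realizes_in F (fun x : K => x) C (a C).
    move=> C /ha [_ e]; rewrite {1}e; split => c; exact: iff_refl.
  have [n [cs [csC [csinj [p [p0 pF pe]]]]]] := dep K (fun x => x) emb a real.
  pose t := fun i => a (cs i).
  have tS i : S (t i) by case: (ha _ (csC i)).
  have tinj : injective t.
    move=> i j tij; apply: csinj.
    by rewrite (proj2 (ha _ (csC i))) (proj2 (ha _ (csC j))) -/(t i) -/(t j) tij.
  by move/eqP: p0; apply; apply: (iS n t tinj tS p pF pe).
- by move=> s Ss; exists (cutof F s) => //; exists s.
- by move=> C [s Ss ->]; exists s.
- move=> C s s' [s0 Ss0 ->] Ss Ss' [h1 h2] [h1' h2'].
  apply: contrapT => ne; have [c Fc [/andP[sc cs']|/andP[s'c cs]]] := dS _ _ Ss Ss' ne.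
  + have [_ a1] := (h2 c).2 (conj Fc sc).
    have [_ a2] := (h1' c).2 (conj Fc cs').
    by move: (lt_trans a1 a2); rewrite ltxx.
  + have [_ a1] := (h2' c).2 (conj Fc s'c).
    have [_ a2] := (h1 c).2 (conj Fc cs).
    by move: (lt_trans a1 a2); rewrite ltxx.
Qed.

End Good.

Section Next.
Variable K : rcfType.

Lemma exists_max_good (F : K -> Prop) :
  exists S, good F S /\
    forall S', subset_K S S' -> ~ subset_K S' S -> ~ good F S'.
Proof.
have [Fam hsub htot|S [gS hmax]] := @classical_sets.Zorn_bigcup K (good F).
  apply: (good_chain (Fam := Fam)) => //.
exists S; split => // S' sub nsub gS'.
by apply: (hmax S') => //; split => //.
Qed.

Definition Smax (F : K -> Prop) : K -> Prop := projT1 (cid (exists_max_good F)).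

Lemma Smax_good F : good F (Smax F).
Proof. exact: (proj1 (projT2 (cid (exists_max_good F)))). Qed.

Lemma Smax_max F S' : subset_K (Smax F) S' -> ~ subset_K S' (Smax F) -> ~ good F S'.
Proof. exact: (proj2 (projT2 (cid (exists_max_good F))) S'). Qed.

Definition genS (F : K -> Prop) := gen_field (fun y => F y \/ Smax F y).

Definition next (F : K -> Prop) : K -> Prop := algebraic_over (genS F).

Lemma genS_subfield F : is_subfield (genS F).
Proof. exact: gen_subfield. Qed.

Lemma next_sub F : subset_K F (next F).
Proof. by move=> x Fx; apply: alg_sub; [apply: genS_subfield|apply: gen_contains; left]. Qed.

Lemma Smax_next F : subset_K (Smax F) (next F).
Proof. by move=> x Fx; apply: alg_sub; [apply: genS_subfield|apply: gen_contains; right]. Qed.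

Lemma next_rc F : is_real_closed_subfield (next F).
Proof. exact/alg_rc/genS_subfield. Qed.

Lemma next_closure F : is_real_closure_of (next F) (genS F).
Proof.
split; first exact: next_rc.
- by apply: alg_sub; apply: genS_subfield.
- by [].
Qed.

Lemma next_key (F : K -> Prop) (x : K) : is_subfield F -> ~ next F x ->
  exists s, [/\ Smax F s, s <> x & forall c, F c -> ~ between c s x].
Proof.
move=> hF nx; apply: contrapT => hno.
have xS : ~ Smax F x by move=> /Smax_next.
have hx : forall s, Smax F s -> exists2 c, F c & between c s x.
  move=> s Ss; apply: contrapT => hc; apply: hno; exists s; split => //.
    by move=> e; apply: xS; rewrite -e.
  by move=> c Fc bc; apply: hc; exists c.
have g := good_ext hF (Smax_good F) nx hx.
have sub : subset_K (Smax F) (fun y => Smax F y \/ y = x) by move=> y Sy; left.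
have nsub : ~ subset_K (fun y => Smax F y \/ y = x) (Smax F).
  by move=> /(_ x (or_intror erefl)).
exact: (Smax_max sub nsub g).
Qed.

Lemma Smax_disj F : is_subfield F -> forall s, Smax F s -> ~ F s.
Proof. move=> hF; exact: good_disjoint hF (Smax_good F). Qed.

Lemma Smax_realizes F : is_subfield F -> realizes_indep_cuts F (Smax F).
Proof. move=> hF; exact: good_realizes hF (Smax_good F). Qed.

End Next.

Section K0.
Variable K : rcfType.

Definition K0 : K -> Prop := algebraic_over (gen_field (fun _ : K => False)).

Lemma K0_rc : is_real_closed_subfield K0.
Proof. exact/alg_rc/gen_subfield. Qed.

Lemma gen0_rat (x : K) : gen_field (fun _ => False) x -> exists q : rat, x = ratr q.
Proof.
move=> hx; apply: (hx (fun y => exists q : rat, y = ratr q)) => //; split.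
- by exists 0; rewrite rmorph0.
- by exists 1; rewrite rmorph1.
- by move=> a b [q ->] [r ->]; exists (q - r); rewrite rmorphB.
- by move=> a b [q ->] [r ->]; exists (q * r); rewrite rmorphM.
- by move=> a [q ->] _; exists q^-1; rewrite fmorphV.
Qed.

Definition qof (y : K) : rat :=
  match pselect (exists q : rat, y = ratr q) with
  | left h => projT1 (cid h) | right _ => 0 end.

Lemma qofK y : (exists q : rat, y = ratr q) -> ratr (qof y) = y.
Proof. by move=> h; rewrite /qof; case: pselect => // h'; case: cid. Qed.

Lemma K0_ratpoly x : K0 x ->
  exists r : {poly rat}, r != 0 /\ root (map_poly ratr r) x.
Proof.
case=> p pG [p0 px].
pose r := \poly_(i < size p) qof p`_i.
have e : map_poly ratr r = p.
  apply/polyP => i; rewrite coef_map coef_poly.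
  case: ltnP => [_|/(nth_default 0) ->]; last exact: (rmorph0 ratr).
  exact: (qofK (gen0_rat (pG i))).
by exists r; rewrite -(map_poly_eq0 (ratr : {rmorphism rat -> K})) e.
Qed.

Definition polof (x : K) : {poly rat} :=
  match pselect (exists r : {poly rat}, r != 0 /\ root (map_poly ratr r) x) with
  | left h => projT1 (cid h) | right _ => 0 end.

Lemma polofP x : K0 x -> polof x != 0 /\ root (map_poly ratr (polof x)) x.
Proof.
move=> /K0_ratpoly h; rewrite /polof; case: pselect => // h'; by case: cid.
Qed.

Lemma K0_countable : exists g : K -> nat,
  forall x y, K0 x -> K0 y -> g x = g y -> x = y.
Proof.
exists (fun x => pickle (polof x, index x (rootsR (map_poly ratr (polof x))))).
move=> x y Kx Ky /(pcan_inj pickleK_inv) [ep ei].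
have inx : x \in rootsR (map_poly ratr (polof x)).
  have [p0 rx] := polofP Kx.
  rewrite -roots_on_rootsR ?rx ?andbT //.
  by rewrite map_poly_eq0.
have iny : y \in rootsR (map_poly ratr (polof y)).
  have [p0 ry] := polofP Ky.
  rewrite -roots_on_rootsR ?ry ?andbT //.
  by rewrite map_poly_eq0.
rewrite -(nth_index 0 inx) -(nth_index 0 iny) ei ep //.
Qed.

End K0.

Section Union.
Variable K : rcfType.

Lemma pred_ext (P Q : K -> Prop) : (forall x, P x <-> Q x) -> P = Q.
Proof. by move=> h; apply: funext => x; apply: propext. Qed.

Lemma dir_union_rc (Fam : (K -> Prop) -> Prop) :
  (exists X, Fam X) ->
  (forall X, Fam X -> is_real_closed_subfield X) ->
  (forall X Y, Fam X -> Fam Y -> subset_K X Y \/ subset_K Y X) ->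
  is_real_closed_subfield (fun y => exists2 X, Fam X & X y).
Proof.
move=> [X0 FX0] hrc htot.
have lst : forall l : seq K, (forall y, y \in l -> exists2 X, Fam X & X y) ->
    exists2 X, Fam X & forall y, y \in l -> X y.
  elim => [|a l ih] hl; first by exists X0.
  have [Xa FXa Xa_a] := hl a (mem_head _ _).
  have [Xl FXl hXl] := ih (fun y yl => hl y (@mem_behead _ (a :: l) y yl)).
  case: (htot _ _ FXa FXl) => sub.
    by exists Xl => // y; rewrite inE => /orP[/eqP ->|/hXl//]; apply: sub.
  by exists Xa => // y; rewrite inE => /orP[/eqP ->//|/hXl]; apply: sub.
have two : forall x y, (exists2 X, Fam X & X x) -> (exists2 X, Fam X & X y) ->
    exists2 X, Fam X & X x /\ X y.
  move=> x y hx hy.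
  have hl : forall z, z \in [:: x; y] -> exists2 X, Fam X & X z.
    by move=> z; rewrite !inE => /orP[/eqP ->|/eqP ->].
  have [X FX hX] := lst _ hl.
  by exists X => //; split; apply: hX; rewrite !inE eqxx ?orbT.
split; first split.
- by exists X0 => //; case: (hrc _ FX0) => -[].
- by exists X0 => //; case: (hrc _ FX0) => -[].
- move=> x y hx hy; have [X FX [Xx Xy]] := two x y hx hy.
  by exists X => //; case: (hrc _ FX) => -[_ _ h _ _] _; apply: h.
- move=> x y hx hy; have [X FX [Xx Xy]] := two x y hx hy.
  by exists X => //; case: (hrc _ FX) => -[_ _ _ h _] _; apply: h.
- move=> x [X FX Xx] x0; exists X => //.
  by case: (hrc _ FX) => -[_ _ _ _ h] _; apply: h.
move=> p a b pU hA hB ab hab.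
have hl : forall z, z \in a :: b :: (p : seq K) -> exists2 X, Fam X & X z.
  move=> z; rewrite !inE => /orP[/eqP ->//|/orP[/eqP ->//|/(nthP 0) [i lt <-]]].
  exact: pU.
have [X FX hX] := lst _ hl.
have [_ ivt] := hrc _ FX.
have pX : poly_over X p.
  move=> i; case: (ltnP i (size p)) => [lt|ge].
    by apply: hX; rewrite !inE mem_nth ?orbT.
  rewrite nth_default //; by case: (hrc _ FX) => -[].
have hb : X b by apply: hX; rewrite !inE eqxx orbT.
have [x Xx hx] := ivt p a b pX (hX a (mem_head _ _)) hb ab hab.
by exists x => //; exists X.
Qed.

End Union.

Section Chain.
Variable K : rcfType.
Variables (T : Type) (Rk : T -> T -> Prop).
Hypothesis wT : strict_wellorder Rk.
Hypothesis infT : exists f : nat -> T, forall m n, f m = f n -> m = n.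
Hypothesis cofT : forall X : T -> Prop, (forall k, exists2 x, X x & (Rk k x \/ k = x)) ->
        ord_le Rk (sub_rel Rk X).
Hypothesis bndT : bounds_increasing_seqs K Rk.

Lemma T_nomax a : exists b, Rk a b.
Proof.
apply: contrapT => hno.
have cof : forall k, exists2 x, (fun y => y = a) x & (Rk k x \/ k = x).
  move=> k; exists a => //; case: (wo_tri wT k a) => [h|h|h]; [left|right|] => //.
  by case: hno; exists k.
have [g [mono _]] := cofT cof.
have [f finj] := infT.
have ne : f 0%N <> f 1%N by move=> /finj.
case: (wo_tri wT (f 0%N) (f 1%N)) => [h|//|h].
- have := mono _ _ h; rewrite /sub_rel (proj2_sig (g (f 0%N))) (proj2_sig (g (f 1%N))).
  exact: wo_irr.
- have := mono _ _ h; rewrite /sub_rel (proj2_sig (g (f 0%N))) (proj2_sig (g (f 1%N))).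
  exact: wo_irr.
Qed.

Definition Dfun (i : T) (rec : forall j, Rk j i -> K -> Prop) : K -> Prop :=
  next (fun x => K0 x \/ exists j (h : Rk j i), rec j h x).

Definition D : T -> K -> Prop := Fix (wo_wf wT) (fun _ => K -> Prop) Dfun.

Definition U (i : T) : K -> Prop := fun x => K0 x \/ exists2 j, Rk j i & D j x.

Lemma D_eq i : D i = next (U i).
Proof.
rewrite /D Fix_eq /Dfun.
  congr next; apply: pred_ext => x; rewrite /U; split.
    by case=> [?|[j [h hx]]]; [left|right; exists j].
  by case=> [?|[j h hx]]; [left|right; exists j, h].
move=> x f g fg; congr next; apply: pred_ext => y.
by split => -[?|[j [h hy]]]; (try by left); right; exists j, h; rewrite ?fg // -fg.
Qed.

Lemma U_D i : subset_K (U i) (D i).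
Proof. by rewrite D_eq; apply: next_sub. Qed.

Lemma D_U j i : Rk j i -> subset_K (D j) (U i).
Proof. by move=> h x hx; right; exists j. Qed.

Lemma K0_U i : subset_K (@K0 K) (U i).
Proof. by move=> x hx; left. Qed.

Lemma U_rc i : is_real_closed_subfield (U i).
Proof.
pose Fam := fun X : K -> Prop => X = @K0 K \/ exists2 j, Rk j i & X = D j.
have -> : U i = (fun y => exists2 X, Fam X & X y).
  apply: pred_ext => x; split.
    by case=> [h|[j h hx]]; [exists (@K0 K) => //; left|exists (D j) => //; right; exists j].
  by move=> [X [->|[j h ->]] hx]; [left|right; exists j].
apply: dir_union_rc.
- by exists (@K0 K); left.
- move=> X [->|[j _ ->]]; first exact: K0_rc.
  by rewrite D_eq; apply: next_rc.
- have K0D : forall j, subset_K (@K0 K) (D j) by move=> j x hx; apply: U_D; left.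
  move=> X Y [->|[j _ ->]] [->|[j' _ ->]].
  + by left.
  + by left.
  + by right.
  + case: (wo_tri wT j j') => [h|->|h]; [left|left|right] => //.
    * by move=> x hx; apply: U_D; apply: D_U h _ hx.
    * by move=> x hx; apply: U_D; apply: D_U h _ hx.
Qed.

Lemma U_sub i : is_subfield (U i).
Proof. by case: (U_rc i). Qed.

Lemma exhaust x : exists i, U i x.
Proof.
apply: contrapT => hx.
have nD : forall i, ~ next (U i) x.
  move=> i hD; have [b ib] := T_nomax i; apply: hx; exists b.
  by apply: (D_U ib); rewrite D_eq.
have hsel : forall i, exists s, [/\ Smax (U i) s, s <> x &
    forall c, U i c -> ~ between c s x].
  by move=> i; apply: next_key (U_sub i) (nD i).
pose sel := fun i => projT1 (cid (hsel i)).
have selP : forall i, [/\ Smax (U i) (sel i), sel i <> x &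
    forall c, U i c -> ~ between c (sel i) x].
  by move=> i; rewrite /sel; case: cid.
have selU : forall i j, Rk i j -> U j (sel i).
  move=> i j ij; apply: (D_U ij); rewrite D_eq; apply: Smax_next.
  by case: (selP i).
have selnU : forall j, ~ U j (sel j).
  by move=> j; apply: Smax_disj (U_sub j) _ _; case: (selP j).
have mono1 : forall i j, Rk i j -> sel i < x -> sel j < x -> sel i < sel j.
  move=> i j ij ix jx; case: (ltgtP (sel i) (sel j)) => // [ji|e].
    case: (selP j) => _ _ /(_ (sel i) (selU _ _ ij)); case.
    by left; rewrite ji ix.
  by case: (selnU j); rewrite -e; apply: selU.
have mono2 : forall i j, Rk i j -> x < sel i -> x < sel j -> sel j < sel i.
  move=> i j ij ix jx; case: (ltgtP (sel i) (sel j)) => // [ij'|e].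
    case: (selP j) => _ _ /(_ (sel i) (selU _ _ ij)); case.
    by right; rewrite ij' ix.
  by case: (selnU j); rewrite -e; apply: selU.
have side : forall i, sel i < x \/ x < sel i.
  move=> i; case: (selP i) => _ ne _; case: (ltgtP (sel i) x) => [h|h|h];
  [left|right|] => //.
have cof : (forall k, exists2 y, sel y < x & (Rk k y \/ k = y)) \/
           (forall k, exists2 y, x < sel y & (Rk k y \/ k = y)).
  case: (pselect (forall k, exists2 y, sel y < x & (Rk k y \/ k = y))) => [h|h];
    first by left.
  right => k.
  have [k0 hk0] : exists k0, ~ exists2 y, sel y < x & (Rk k0 y \/ k0 = y).
    by apply: contrapT => hn; apply: h => k1; apply: contrapT => hk1; apply: hn; exists k1.
  have step : forall m, (Rk k0 m \/ k0 = m) -> x < sel m.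
    move=> m hm; case: (side m) => // hm'; case: hk0; by exists m.
  case: (wo_tri wT k k0) => [h1|e|h1].
  - by exists k0; [apply: step; right|left].
  - by exists k; [apply: step; right; rewrite e|right].
  - by exists k; [apply: step; left|right].
have contra : forall s : T -> K, (forall u v, Rk u v -> s u < s v) -> False.
  move=> s hs; exact: (no_self_lt wT (bndT wT hs)).
case: cof => hc.
- have [g [mono _]] := cofT hc.
  apply: (contra (fun t => sel (proj1_sig (g t)))) => u v uv.
  have := mono _ _ uv; rewrite /sub_rel.
  case: (g u) => a ha; case: (g v) => b hb /= ab.
  exact: mono1.
- have [g [mono _]] := cofT hc.
  apply: (contra (fun t => - sel (proj1_sig (g t)))) => u v uv.
  have := mono _ _ uv; rewrite /sub_rel.
  case: (g u) => a ha; case: (g v) => b hb /= ab.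
  by rewrite ltrN2; apply: mono2.
Qed.


Definition Ro (a b : option T) : Prop :=
  match a, b with
  | Some x, Some y => Rk x y
  | Some _, None => True
  | None, _ => False end.

Definition Kc (o : option T) : K -> Prop :=
  match o with Some i => U i | None => fun _ => True end.

Definition Sc (o : option T) : K -> Prop :=
  match o with Some i => Smax (U i) | None => fun _ => False end.

Lemma Ro_wo : strict_wellorder Ro.
Proof.
split.
- move=> [x|] [y|] [z|] //=; exact: wo_trans.
- move=> [x|] //=; exact: wo_irr.
- move=> [x|] [y|] /=.
  + by case: (wo_tri wT x y) => [h|->|h]; [constructor 1|constructor 2|constructor 3].
  + by constructor 1.
  + by constructor 3.
  + by constructor 2.
- have accS : forall x, Acc Ro (Some x).
    move=> x; elim: (wo_wf wT x) => {}x _ ih; apply: Acc_intro => -[y|] yx.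
      exact: ih.
    by [].
  move=> [x|]; first exact: accS.
  by apply: Acc_intro => -[y|] yx; [apply: accS|].
Qed.
Lemma Kc_rc_top : is_real_closed_subfield (fun _ : K => True).
Proof.
split; first by split.
move=> p a b _ _ _ ab hab; have [x hx rx] := poly_ivt ab hab.
by exists x => //; rewrite hx.
Qed.

Lemma chain_exists : exists (I : Type) (R : I -> I -> Prop) (top : I)
    (Kc S : I -> K -> Prop),
  height_chain R top Kc S /\ ord_le (sub_rel R (fun i => R i top)) Rk.
Proof.
have [f0 _] := infT; pose t0 := f0 0%N.
exists (option T), Ro, None, Kc, Sc; split; last first.
  exists (fun x : {i | Ro i None} => match proj1_sig x with Some t => t | None => t0 end).
  split.
    by move=> [[x|] hx] [[y|] hy].
  move=> [[x|] hx] b bx //.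
  by exists (exist (fun i => Ro i None) (Some b) I).
split.
- exact: Ro_wo.
- by move=> [x|]; [left|right].
- move=> [x|]; [exact: U_rc|exact: Kc_rc_top].
- move=> [x|] [y|] xy z hz //.
  by apply: (D_U xy); apply: U_D.
split.
- move=> [i0|] hmin.
    have [g hg] := K0_countable K; exists g => x y hx hy; apply: hg.
    + by case: hx => // -[j h _]; case: (hmin (Some j)).
    + by case: hy => // -[j h _]; case: (hmin (Some j)).
  by case: (hmin (Some t0)).
- move=> [a|] [j hj] hlim x.
    split.
      case=> [hK|[j' hj' hD]].
        case: j hj hlim => [b|] hb _ //.
        by exists (Some b) => //; left.
      have [k h1 h2] := hlim (Some j') hj'.
      case: k h1 h2 => [k|] h1 h2 //.
      by exists (Some k) => //; apply: D_U h1 _ hD.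
    by case=> -[b|] hb hx //; apply: (D_U hb); apply: U_D.
  split => // _; have [i hi] := exhaust x; by exists (Some i).
- move=> [a|] [b|] ab himm //.
    have Ueq : U b = next (U a).
      apply: pred_ext => x; split.
        case=> [hK|[j hj hD]]; first by rewrite -D_eq; apply: U_D; left.
        rewrite -D_eq; case: (wo_tri wT j a) => [h|e|h].
        + by apply: U_D; apply: D_U h _ hD.
        + by rewrite -e.
        + by case: (himm (Some j)).
      by rewrite -D_eq => hx; apply: D_U ab _ hx.
    split.
    + by move=> x hx; rewrite /Kc Ueq; apply: Smax_next.
    + exact: Smax_realizes (U_sub a).
    + by rewrite /Kc Ueq; apply: next_closure.
  have [b ab'] := T_nomax a; by case: (himm (Some b)).
- by [].
Qed.

End Chain.

Theorem lemma3p3 (K : rcfType) :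
  (exists (T : Type) (Rk : T -> T -> Prop), is_depth K Rk) /\
  (forall (T : Type) (Rk : T -> T -> Prop), is_depth K Rk ->
    exists (I : Type) (R : I -> I -> Prop) (top : I) (Kc S : I -> K -> Prop),
      height_chain R top Kc S /\
      ord_le (sub_rel R (fun i => R i top)) Rk).
Proof.
split; first exact: depth_exists.
move=> T Rk [[[wT _] infT cofT] bndT _].
exact: (chain_exists wT infT cofT bndT).
Qed.
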